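(* Let $I$ be the graph formed from two vertex-disjoint copies of the complete graph $K_4$ by adding a single edge joining one vertex of the first copy to one vertex of the second copy. Then $\chi_{td}(I)=8$, $I$ is connected, $I$ has order $8=\chi_{td}(I)$, and $I$ is not saturable.
   Context: For a simple graph $G$ and a positive integer $k$, a proper $k$-total difference labeling (TDL) of $G$ is a function $f: V(G)\to\{1,\dots,k\}$, extended to edges by $f(\{u,v\}) = |f(u)-f(v)|$, such that: (i) adjacent vertices receive different labels; (ii) two distinct edges sharing a vertex receive different labels; (iii) no edge receives the same label as either of its endpoints. $\chi_{td}(G)$ denotes the smallest $k$ for which such a labeling exists. A TDL of a graph $G$ of order $n$ is saturated if $\chi_{td}(G)=n$ and the set of vertex labels used is exactly $\{1,2,\dots,\chi_{td}(G)\}$. $G$ is saturable if it has at least one saturated labeling. *)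

(* Defs.v *)
From mathcomp Require Import all_boot.
Set Implicit Arguments. Unset Strict Implicit. Unset Printing Implicit Defensive.

Definition absd (a b : nat) : nat := (a - b) + (b - a).

Definition simple_graph (T : finType) (e : rel T) : Prop :=
  (forall u, ~~ e u u) /\ (forall u v, e u v = e v u).

(* proper k-total difference labeling f : V -> {1..k}; the edge {u,v} gets |f u - f v| *)
Definition is_tdl (T : finType) (e : rel T) (k : nat) (f : T -> nat) : Prop :=
  [/\ (forall v, 1 <= f v <= k),
      (forall u v, e u v -> f u != f v),
      (forall u v w, e u v -> e u w -> v != w -> absd (f u) (f v) != absd (f u) (f w))
    & (forall u v, e u v -> absd (f u) (f v) != f u /\ absd (f u) (f v) != f v)].

Definition has_tdl (T : finType) (e : rel T) (k : nat) : Prop :=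
  exists f : T -> nat, is_tdl e k f.

Definition is_chi_td (T : finType) (e : rel T) (k : nat) : Prop :=
  has_tdl e k /\ forall j, has_tdl e j -> k <= j.

Definition saturated (T : finType) (e : rel T) (f : T -> nat) : Prop :=
  [/\ is_chi_td e #|T|, is_tdl e #|T| f
    & forall i, 1 <= i <= #|T| -> exists v, f v = i].

Definition saturable (T : finType) (e : rel T) : Prop :=
  exists f : T -> nat, saturated e f.

Definition connected (T : finType) (e : rel T) : Prop :=
  forall u v : T, connect e u v.

(* The graph I: vertices 0..3 form a K4, vertices 4..7 form a K4,
   plus the edge {3,4}. *)
Definition Iedge : rel 'I_8 := fun u v =>
  ((u != v) && ((u < 4) == (v < 4)))
  || ((val u == 3) && (val v == 4)) || ((val u == 4) && (val v == 3)).

(* Main.v *)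
Require Import Defs.
From mathcomp Require Import all_boot.

Definition pe (x y : nat) : bool := [&& x != y, absd x y != x & absd x y != y].
Definition vert (x y z w : nat) : bool :=
  [&& pe x y, pe x z, pe x w, absd x y != absd x z, absd x y != absd x w
    & absd x z != absd x w].
Definition k4ok (a b c d : nat) : bool :=
  [&& vert a b c d, vert b a c d, vert c a b d & vert d a b c].

Lemma k4check : all (fun a => all (fun b => all (fun c => all (fun d =>
   k4ok a b c d ==> [&& (a == 8) || (b == 8) || (c == 8) || (d == 8),
                       a != 4, b != 4, c != 4 & d != 4])
   (iota 1 8)) (iota 1 8)) (iota 1 8)) (iota 1 8).
Proof. vm_compute. reflexivity. Qed.

Lemma k4fact {a b c d} : 1 <= a <= 8 -> 1 <= b <= 8 -> 1 <= c <= 8 -> 1 <= d <= 8 ->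
  k4ok a b c d -> [&& (a == 8) || (b == 8) || (c == 8) || (d == 8),
                       a != 4, b != 4, c != 4 & d != 4].
Proof.
move=> Ha Hb Hc Hd Hk.
have mem x : 1 <= x <= 8 -> x \in iota 1 8 by rewrite mem_iota => /andP[-> /=]; rewrite ltnS.
move: k4check => /allP /(_ a (mem _ Ha)) /allP /(_ b (mem _ Hb)) /allP /(_ c (mem _ Hc))
  /allP /(_ d (mem _ Hd)). by rewrite Hk.
Qed.

Notation o k := (@Ordinal 8 k isT).
Definition ords8 : seq 'I_8 := [:: o 0; o 1; o 2; o 3; o 4; o 5; o 6; o 7].
Lemma mem8 (x : 'I_8) : x \in ords8.
Proof. by case: x => [[|[|[|[|[|[|[|[|n]]]]]]]] H]. Qed.
Lemma allI (P : 'I_8 -> bool) : all P ords8 -> forall x, P x.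
Proof. by move/allP=> H x; apply: H; apply: mem8. Qed.
Lemma caseI (P : 'I_8 -> Prop) : P (o 0) -> P (o 1) -> P (o 2) -> P (o 3) ->
  P (o 4) -> P (o 5) -> P (o 6) -> P (o 7) -> forall x, P x.
Proof.
move=> H0 H1 H2 H3 H4 H5 H6 H7 [[|[|[|[|[|[|[|[|n]]]]]]]] H];
  try by rewrite (bool_irrelevance H isT).
by [].
Qed.

Lemma Isym u v : Iedge u v = Iedge v u.
Proof.
have: all (fun u => all (fun v => Iedge u v == Iedge v u) ords8) ords8.
  by vm_compute.
by move/allI/(_ u)/allI/(_ v)/eqP.
Qed.

Lemma tdl_vert {k f p q r s} : is_tdl Iedge k f ->
  Iedge p q -> Iedge p r -> Iedge p s -> q != r -> q != s -> r != s ->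
  vert (f p) (f q) (f r) (f s).
Proof.
case=> _ H2 H3 H4 Eq Er Es nqr nqs nrs.
have pair u v : Iedge u v -> pe (f u) (f v).
  by move=> E; rewrite /pe H2 //=; case: (H4 _ _ E) => -> ->.
by rewrite /vert !pair //= !H3.
Qed.

Lemma tdl_k4 {k f p q r s} : is_tdl Iedge k f ->
  Iedge p q -> Iedge p r -> Iedge p s -> Iedge q r -> Iedge q s -> Iedge r s ->
  p != q -> p != r -> p != s -> q != r -> q != s -> r != s ->
  k4ok (f p) (f q) (f r) (f s).
Proof.
move=> T Epq Epr Eps Eqr Eqs Ers npq npr nps nqr nqs nrs.
have Eqp := Epq; rewrite Isym in Eqp. have Erp := Epr; rewrite Isym in Erp.
have Esp := Eps; rewrite Isym in Esp. have Erq := Eqr; rewrite Isym in Erq.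
have Esq := Eqs; rewrite Isym in Esq. have Esr := Ers; rewrite Isym in Esr.
by rewrite /k4ok !(tdl_vert T) // 1?eq_sym.
Qed.

Definition f0 (v : 'I_8) : nat := nth 0 [:: 1; 3; 8; 7; 5; 1; 6; 8] v.

Lemma f0_tdl : is_tdl Iedge 8 f0.
Proof.
split.
- by apply: allI; vm_compute.
- move=> u v E; have: all (fun u => all (fun v => Iedge u v ==> (f0 u != f0 v)) ords8) ords8.
    by vm_compute.
  by move/allI/(_ u)/allI/(_ v); rewrite E.
- move=> u v w E1 E2 N; have: all (fun u => all (fun v => all (fun w =>
     [&& Iedge u v, Iedge u w & v != w] ==> (absd (f0 u) (f0 v) != absd (f0 u) (f0 w)))
     ords8) ords8) ords8.
    by vm_compute.
  by move/allI/(_ u)/allI/(_ v)/allI/(_ w); rewrite E1 E2 N.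
- move=> u v E; have: all (fun u => all (fun v => Iedge u v ==>
     (absd (f0 u) (f0 v) != f0 u) && (absd (f0 u) (f0 v) != f0 v)) ords8) ords8.
    by vm_compute.
  by move/allI/(_ u)/allI/(_ v); rewrite E => /andP[-> ->].
Qed.

Lemma labels {k f} : is_tdl Iedge k f -> k <= 8 ->
  k4ok (f (o 0)) (f (o 1)) (f (o 2)) (f (o 3)) /\ k4ok (f (o 4)) (f (o 5)) (f (o 6)) (f (o 7))
  /\ forall v, 1 <= f v <= 8.
Proof.
move=> T Hk; split; last split.
- by apply: (tdl_k4 T).
- by apply: (tdl_k4 T).
- move=> v; case: T => H _ _ _; case/andP: (H v) => -> /= Hv.
  exact: leq_trans Hv Hk.
Qed.

Theorem mainTheorem13 :
  [/\ simple_graph Iedge, is_chi_td Iedge 8, connected Iedge,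
      #|'I_8| = 8 & ~ saturable Iedge].
Proof.
split.
- split; last exact: Isym.
  by apply: allI; vm_compute.
- split; first by exists f0; exact: f0_tdl.
  move=> j [f T]; rewrite leqNgt; apply/negP => Hj.
  have [K1 [_ B]] := labels T (ltnW Hj).
  case/and5P: (k4fact (B _) (B _) (B _) (B _) K1) => H _ _ _ _.
  case: T => Hb _ _ _.
  have L v : f v <= 7 by case/andP: (Hb v) => _ Hv; exact: leq_trans Hv Hj.
  by move: H (L (o 0)) (L (o 1)) (L (o 2)) (L (o 3));
     rewrite -!orbA => /or4P[] /eqP ->.
- have c1 u v : Iedge u v -> connect Iedge u v by move=> E; apply: connect1.
  have to0 : forall u, connect Iedge u (o 0).
    apply: caseI; first exact: connect0; try by apply: c1.
    + by apply: (connect_trans (c1 (o 4) (o 3) isT)); apply: c1.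
    + by apply: (connect_trans (c1 (o 5) (o 4) isT)); apply: (connect_trans (c1 (o 4) (o 3) isT)); apply: c1.
    + by apply: (connect_trans (c1 (o 6) (o 4) isT)); apply: (connect_trans (c1 (o 4) (o 3) isT)); apply: c1.
    + by apply: (connect_trans (c1 (o 7) (o 4) isT)); apply: (connect_trans (c1 (o 4) (o 3) isT)); apply: c1.
  have sym : connect_sym Iedge by apply: sym_connect_sym => x y; exact: Isym.
  by move=> u v; apply: (connect_trans (to0 u)); rewrite sym.
- exact: card_ord.
- case=> f [_ T S].
  rewrite card_ord in T S.
  have [K1 [K2 B]] := labels T (leqnn 8).
  case/and5P: (k4fact (B _) (B _) (B _) (B _) K1) => _ a0 a1 a2 a3.
  case/and5P: (k4fact (B _) (B _) (B _) (B _) K2) => _ a4 a5 a6 a7.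
  have N : forall v, f v != 4 by apply: caseI.
  by case: (S 4 isT) => v /eqP; rewrite (negbTE (N v)).
Qed.
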